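(* Let $a\ge k\ge1$ be integers. For each $\lambda\in\mathrm{SPar}_{a,k}$ let $g_\lambda\in\mathbb Z[y_{k+1},\dots,y_a]$ be any polynomial of the form $$g_\lambda=e_{\bar\lambda-\rho_k}(y_{k+1},\dots,y_a)+\sum_{\nu}d_{\lambda,\nu}\,e_\nu(y_{k+1},\dots,y_a),$$ a finite sum over partitions $\nu$ with $|\nu|=|\bar\lambda-\rho_k|$ and $\nu\triangleright\bar\lambda-\rho_k$, with $d_{\lambda,\nu}\in\mathbb Z$. Then the family $\big(g_\lambda\cdot e_\mu(y_1,\dots,y_a)\big)_{(\lambda,\mu)\in\mathrm{SPar}_{a,k}\times\mathrm{Par}_a}$ is linearly independent over $\mathbb Z$ in $\mathbb Z[y_1,\dots,y_a]$.
   Context: $\mathrm{Par}_a$ is the set of partitions with all parts $\le a$ (including the empty partition); $\mathrm{SPar}_{a,k}$ is the set of strict partitions (pairwise distinct parts) with exactly $k$ parts, all in $\{1,\dots,a\}$. For $\lambda=(\lambda_1>\dots>\lambda_k)\in\mathrm{SPar}_{a,k}$, $\bar\lambda=(\lambda_1-1,\dots,\lambda_k-1)$, $\rho_k=(k-1,k-2,\dots,1,0)$, so $\bar\lambda-\rho_k=(\lambda_1-k,\lambda_2-k+1,\dots,\lambda_k-1)$ is a partition (possibly with zero parts). $e_r$ denotes the $r$-th elementary symmetric polynomial in the indicated variables ($e_0=1$, $e_r=0$ if $r<0$ or $r$ exceeds the number of variables), and for a sequence $\nu=(\nu_1,\nu_2,\dots)$, $e_\nu=\prod_i e_{\nu_i}$.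 $\triangleright$ is strict dominance: $\rho\triangleright\sigma$ iff $\rho\neq\sigma$ and $\rho_1+\dots+\rho_i\ge\sigma_1+\dots+\sigma_i$ for all $i$ (partitions of equal size, zero parts ignored). *)

(* Defs.v *)
From HB Require Import structures.
From mathcomp Require Import all_boot all_order all_algebra.
From mathcomp Require Import mpoly.
Set Implicit Arguments. Unset Strict Implicit. Unset Printing Implicit Defensive.
Import Order.TTheory GRing.Theory Num.Theory.
Local Open Scope ring_scope.

(* Variables y_1, ..., y_a are 'X_i for i : 'I_a (y_{j} = 'X_(j-1)). *)

Definition esub (a : nat) (S : {set 'I_a}) (r : nat) : {mpoly int[a]} :=
  \sum_(h : {set 'I_a} | (h \subset S) && (#|h| == r)%N) \prod_(i in h) 'X_i.

Definition esubseq (a : nat) (S : {set 'I_a}) (nu : seq nat) : {mpoly int[a]} :=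
  \prod_(r <- nu) esub S r.

Definition allvars (a : nat) : {set 'I_a} := [set: 'I_a].
Definition tailvars (a k : nat) : {set 'I_a} := [set i : 'I_a | (k <= i)%N].

Definition is_partition (p : seq nat) : bool :=
  sorted geq p && all (fun x => 0 < x)%N p.

Definition in_Par (a : nat) (p : seq nat) : bool :=
  is_partition p && all (fun x => x <= a)%N p.

Definition in_SPar (a k : nat) (l : seq nat) : bool :=
  sorted (fun x y => y < x)%N l && (size l == k) &&
  all (fun x => (0 < x) && (x <= a))%N l.

(* bar(lambda) - rho_k = (lambda_1 - k, lambda_2 - k + 1, ..., lambda_k - 1) *)
Definition lam_shift (k : nat) (l : seq nat) : seq nat :=
  [seq (nth 0 l i - (k - i))%N | i <- iota 0 k].

Definition strip0 (p : seq nat) : seq nat := [seq x <- p | (0 < x)%N].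

Definition sdominates (rho sigma : seq nat) : bool :=
  (rho != sigma) && (sumn rho == sumn sigma) &&
  [forall i : 'I_(size rho + size sigma).+1,
     (sumn (take i sigma) <= sumn (take i rho))%N].

(* Main.v *)
Require Import Defs.
From HB Require Import structures.
From mathcomp Require Import all_boot all_order all_algebra.
From mathcomp Require Import fingroup perm mpoly zify.
Import Order.TTheory GRing.Theory Num.Theory.
Local Open Scope ring_scope.

Lemma esub_gt a (S : {set 'I_a}) r : (#|S| < r)%N -> esub S r = 0.
Proof.
move=> h; rewrite /esub big_pred0 // => A; apply/negbTE; apply/negP=> /andP[sub /eqP cA].
by move: (subset_leq_card sub); rewrite cA leqNgt h.
Qed.

Lemma esub0 a (S : {set 'I_a}) : esub S 0 = 1.
Proof.
rewrite /esub (big_pred1 set0) ?big_set0 // => A.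
by rewrite cards_eq0 andb_idl // => /eqP->; rewrite sub0set.
Qed.

Lemma esubseq_perm a (S : {set 'I_a}) l1 l2 : perm_eq l1 l2 -> esubseq S l1 = esubseq S l2.
Proof. by move=> h; rewrite /esubseq (perm_big _ h). Qed.

Lemma esubseq_strip0 a (S : {set 'I_a}) l : esubseq S (strip0 l) = esubseq S l.
Proof.
rewrite /esubseq /strip0 big_filter big_mkcond; apply: eq_bigr => r _.
by case: r => //=; rewrite esub0.
Qed.

Lemma esubseq_cat a (S : {set 'I_a}) l1 l2 : esubseq S (l1 ++ l2) = esubseq S l1 * esubseq S l2.
Proof. by rewrite /esubseq big_cat. Qed.

Lemma esubseq_nseq0 a (S : {set 'I_a}) m : esubseq S (nseq m 0%N) = 1.
Proof. by rewrite /esubseq big_nseq esub0 iter_fix // mulr1. Qed.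

Lemma esubseq_big a (S : {set 'I_a}) l : ~~ all (fun x => x <= #|S|)%N l -> esubseq S l = 0.
Proof.
case/allPn=> r rin; rewrite -ltnNge => h.
by rewrite /esubseq (big_rem r rin) /= esub_gt // mul0r.
Qed.

Lemma msymXi a (s : 'S_a) (i : 'I_a) : msym s ('X_i : {mpoly int[a]}) = 'X_(s i).
Proof. by rewrite /msym mmapX mmap1U. Qed.

Lemma msym_esub a (s : 'S_a) (A : {set 'I_a}) r : msym s (esub A r) = esub (s @: A) r.
Proof.
rewrite /esub raddf_sum /=.
rewrite (reindex (fun h : {set 'I_a} => (s^-1)%g @: h)) /=; last first.
  exists (fun h : {set 'I_a} => s @: h) => h _; rewrite -imset_comp; rewrite -[RHS]imset_id;
  apply: eq_imset => x /=; rewrite ?permKV ?permK //.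
apply: eq_big => h.
  rewrite card_imset; last exact: perm_inj.
  congr (_ && _).
  apply/idP/idP.
    move=> sub; apply/subsetP=> x xh.
    have -> : x = s ((s^-1)%g x) by rewrite permKV.
    by apply: imset_f; apply: (subsetP sub); apply: imset_f.
  move=> sub; apply/subsetP=> x /imsetP[y yh ->].
  have /imsetP[z zA e] := subsetP sub y yh.
  by rewrite e permK.
move=> _; rewrite rmorph_prod /= (big_imset _ (in2W (@perm_inj _ _))) /=.
by apply: eq_bigr => i _; rewrite msymXi permKV.
Qed.

Lemma perm_sets (T : finType) (A B : {set T}) : #|A| = #|B| ->
  exists s : {perm T}, s @: A = B.
Proof.
move=> cAB.
pose eA := enum A ++ enum (~: A); pose eB := enum B ++ enum (~: B).
have ueA : uniq eA by rewrite cat_uniq !enum_uniq /= andbT;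
  apply/hasPn=> x; rewrite !mem_enum inE => ->.
have ueB : uniq eB by rewrite cat_uniq !enum_uniq /= andbT;
  apply/hasPn=> x; rewrite !mem_enum inE => ->.
have meA x : x \in eA by rewrite mem_cat !mem_enum inE orbN.
have sz : size eA = size eB by rewrite !size_cat -!cardE !cardsC.
pose f x := nth x eB (index x eA).
have finj : injective f.
  move=> x y; rewrite /f => e.
  have ix : (index x eA < size eB)%N by rewrite -sz index_mem.
  have iy : (index y eA < size eB)%N by rewrite -sz index_mem.
  rewrite (set_nth_default y) // in e.
  move/eqP: e; rewrite nth_uniq // => /eqP e.
  by rewrite -(nth_index x (meA x)) e nth_index.
exists (perm finj).
apply/eqP; rewrite eqEcard card_imset ?cAB ?leqnn ?andbT; last exact: perm_inj.
apply/subsetP=> y /imsetP[x xA ->]; rewrite permE /f.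
have xe : x \in enum A by rewrite mem_enum.
rewrite /eA index_cat xe /eB nth_cat -cardE -cAB cardE index_mem xe.
by rewrite -(mem_enum B); apply: mem_nth; rewrite -cardE -cAB cardE index_mem.
Qed.

Lemma prod_esub a (S : {set 'I_a}) (x : {mpoly int[a]}) :
  \prod_(s in S) ('X_s + x) = \sum_(j < #|S|.+1) x ^+ (#|S| - j) * esub S j.
Proof.
pose F (i : 'I_a) : {mpoly int[a]} := if i \in S then 'X_i else 0.
pose G (i : 'I_a) : {mpoly int[a]} := if i \in S then x else 1.
have -> : \prod_(s in S) ('X_s + x) = \prod_i (F i + G i).
  rewrite [RHS](bigID (fun i => i \in S)) /= [X in _ = _ * X]big1 ?mulr1;
    last by move=> i /negbTE h; rewrite /F /G h add0r.
  by apply: eq_bigr => i h; rewrite /F /G h.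
rewrite bigA_distr.
rewrite (bigID (fun J : {set 'I_a} => J \subset S)) /= [X in _ + X]big1 ?addr0;
  last first.
  move=> J nsub; have /subsetPn[i iJ iS] := nsub.
  by rewrite (bigD1 i) //= iJ /F (negbTE iS) mul0r.
rewrite (partition_big (fun J : {set 'I_a} => inord #|J| : 'I_#|S|.+1) xpredT) //=.
apply: eq_bigr => j _; rewrite /esub big_distrr /=.
apply: eq_big => J.
  apply/andb_id2l => sub; rewrite -val_eqE /= inordK // ltnS subset_leq_card //.
move=> /andP[sub /eqP <-]; rewrite inordK ?ltnS ?subset_leq_card //.
rewrite (bigID (fun i => i \in J)) /=; rewrite mulrC; congr (_ * _).
  rewrite (bigID (fun i => i \in S)) /= [X in _ * X]big1 ?mulr1; last first.
    by move=> i /andP[iJ iS]; rewrite (negbTE iJ) /G (negbTE iS).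
  have -> : (#|S| - #|J| = #|[set i | (i \notin J) && (i \in S)]|)%N.
    rewrite -(cardsID J S) (setIidPr sub) addKn; apply: eq_card => i.
    by rewrite !inE andbC.
  rewrite -prodr_const; apply: eq_big => i; first by rewrite inE.
  by move=> /andP[iJ iS]; rewrite (negbTE iJ) /G iS.
by apply: eq_bigr => i iJ; rewrite iJ /F (subsetP sub i iJ).
Qed.

Definition Urows a k := [set u : k.-tuple 'I_a | sorted ltn (map val u)].
Definition Bcols n k := [set t : k.-tuple 'I_n.+1 | sorted leq (map val t)].
Definition Sof a k (u : k.-tuple 'I_a) : {set 'I_a} := ~: [set i in u].

Definition ordle n : rel 'I_n := fun x y => (x <= y)%N.

Definition keyt n k (phi : {ffun 'I_k -> 'I_n.+1}) : k.-tuple 'I_n.+1 :=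
  insubd [tuple of nseq k ord0] (sort (@ordle n.+1) (codom phi)).

Arguments keyt {n k}.
Arguments Sof {a k}.

Lemma keyt_val n k (phi : {ffun 'I_k -> 'I_n.+1}) :
  val (keyt phi) = sort (@ordle n.+1) (codom phi).
Proof. by rewrite val_insubd size_sort size_codom card_ord eqxx. Qed.

Lemma keyt_in n k (phi : {ffun 'I_k -> 'I_n.+1}) : keyt phi \in Bcols n k.
Proof.
rewrite inE keyt_val sorted_map; apply: sort_sorted => x y.
exact: leq_total.
Qed.

Lemma esubseq_keyt a n k (S : {set 'I_a}) (phi : {ffun 'I_k -> 'I_n.+1}) :
  esubseq S (map val (keyt phi)) = \prod_(q < k) esub S (phi q).
Proof.
rewrite keyt_val /esubseq (perm_big (map val (codom phi))); last first.
  by apply: perm_map; rewrite perm_sort.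
by rewrite codomE -map_comp big_map big_enum.
Qed.

Lemma card_inu a k (u : k.-tuple 'I_a) : u \in Urows a k -> #|[set i in u]| = k.
Proof.
rewrite inE => su; rewrite cardsE (card_uniqP _) ?size_tuple //.
rewrite -(map_inj_uniq val_inj); exact: (sorted_uniq ltn_trans ltnn).
Qed.

Lemma card_Sof a k (u : k.-tuple 'I_a) : u \in Urows a k -> #|Sof u| = (a - k)%N.
Proof. by move=> uU; rewrite /Sof cardsCs setCK card_inu // card_ord. Qed.

Lemma Urows_inj a k (u1 u2 : k.-tuple 'I_a) : u1 \in Urows a k -> u2 \in Urows a k ->
  [set i in u1] = [set i in u2] -> u1 = u2.
Proof.
rewrite !inE => s1 s2 e; apply: val_inj; apply: (inj_map val_inj).
apply: (irr_sorted_eq ltn_trans ltnn) => // x.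
apply/mapP/mapP => -[y yu ->]; exists y => //.
  by have := yu; rewrite -[y \in u1]in_set e inE.
by have := yu; rewrite -[y \in u2]in_set -e inE.
Qed.

Lemma Xsub_neq0 a (i j : 'I_a) : i != j -> ('X_i - 'X_j : {mpoly int[a]}) != 0.
Proof.
move=> ne; apply/eqP => /(congr1 (mcoeff U_(i)%MM)).
by rewrite mcoeffB !mcoeffX eqxx eq_mnm1 eq_sym (negbTE ne) subr0 mcoeff0.
Qed.

Definition cc a k n (u : k.-tuple 'I_a) q (j : 'I_n.+1) : {mpoly int[a]} :=
  (- 'X_(tnth u q)) ^+ (n - j).
Arguments cc {a k n}.
Definition Cf a k n (u : k.-tuple 'I_a) (t : k.-tuple 'I_n.+1) : {mpoly int[a]} :=
  \sum_(phi : {ffun 'I_k -> 'I_n.+1} | keyt phi == t) \prod_(q < k) cc u q (phi q).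

Arguments Cf {a k n}.

Lemma expand a k n (u : k.-tuple 'I_a) (S : {set 'I_a}) : #|S| = n ->
  \prod_(q < k) \prod_(s in S) ('X_s - 'X_(tnth u q)) =
  \sum_(t in Bcols n k) Cf u t * esubseq S (map val t).
Proof.
move=> cS.
have -> : \prod_(q < k) \prod_(s in S) ('X_s - 'X_(tnth u q)) =
   \prod_(q < k) \sum_(j : 'I_n.+1) (cc u q j * esub S j).
  apply: eq_bigr => q _; rewrite prod_esub; move: (#|S|) cS => m <-.
  by apply: eq_bigr => j _.
rewrite bigA_distr_bigA /=.
rewrite (partition_big keyt (fun t => t \in Bcols n k)) /=; last by move=> phi _; exact: keyt_in.
apply: eq_bigr => t tB; rewrite /Cf big_distrl /=.
apply: eq_bigr => phi /eqP <-.
by rewrite big_split /= esubseq_keyt.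
Qed.

Lemma core_mat a k (hka : (k <= a)%N) (h : k.-tuple 'I_(a - k).+1 -> {mpoly int[a]}) :
  (forall u, u \in Urows a k ->
     \sum_(t in Bcols (a - k) k) esubseq (Sof u) (map val t) * h t = 0) ->
  forall t, t \in Bcols (a - k) k -> h t = 0.
Proof.
set n := (a - k)%N => hyp.
have eUB : #|Urows a k| = #|Bcols n k|.
  by rewrite /Urows /Bcols card_ltn_sorted_tuples card_sorted_tuples subnKC.
pose N := #|Bcols n k|.
pose colt (j : 'I_N) := enum_val j.
pose rowu (i : 'I_N) := enum_val (cast_ord (esym eUB) i).
have rowuU i : rowu i \in Urows a k by exact: enum_valP.
have coltB j : colt j \in Bcols n k by exact: enum_valP.
have rowu_inj : injective rowu.
  by move=> i1 i2 /enum_val_inj /cast_ord_inj.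
pose Em := \matrix_(i < N, j < N) esubseq (Sof (rowu i)) (map val (colt j)).
pose Cm := \matrix_(i < N, j < N) Cf (rowu i) (colt j).
pose Dd (i i' : 'I_N) : {mpoly int[a]} := \prod_(q < k) \prod_(s in Sof (rowu i')) ('X_s - 'X_(tnth (rowu i) q)).
have sumB (F : k.-tuple 'I_n.+1 -> {mpoly int[a]}) :
    \sum_(t in Bcols n k) F t = \sum_(j < N) F (colt j).
  by rewrite big_enum_val.
have CE : Cm *m Em^T = \matrix_(i, i') Dd i i'.
  apply/matrixP => i i'; rewrite !mxE /Dd (@expand _ _ _ (rowu i) _ (@card_Sof _ _ _ (rowuU i'))).
  by rewrite sumB; apply: eq_bigr => j _; rewrite !mxE.
have Ddiag : \matrix_(i, i') Dd i i' = diag_mx (\row_i Dd i i).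
  apply/matrixP => i i'; rewrite !mxE.
  case: eqP => [<-|/eqP ne]; first by rewrite mulr1n.
  rewrite mulr0n.
  have neu : rowu i != rowu i' by apply: contra ne => /eqP /rowu_inj ->.
  have [q qn] : exists q, tnth (rowu i) q \notin [set x in rowu i'].
    apply/existsP; rewrite -negb_forall; apply: contra neu => /forallP allq.
    apply/eqP; apply: Urows_inj => //; apply/eqP; rewrite eqEcard.
    rewrite !card_inu // leqnn andbT; apply/subsetP => x; rewrite !inE => /tnthP[q ->].
    by have := allq q; rewrite inE.
  rewrite /Dd (bigD1 q) //= (bigD1 (tnth (rowu i) q)) /=; last by rewrite /Sof inE.
  by rewrite subrr !mul0r.
have detD : \det (\matrix_(i, i') Dd i i') != 0.
  rewrite Ddiag det_diag; apply/prodf_neq0 => i _; rewrite mxE.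
  apply/prodf_neq0 => q _; apply/prodf_neq0 => s; rewrite /Sof !inE => sn.
  apply: Xsub_neq0; apply: contra sn => /eqP ->; exact: mem_tnth.
have detE : \det Em != 0.
  by apply: contra detD; rewrite -CE det_mulmx det_tr => /eqP ->; rewrite mulr0.
pose hv := \col_(j < N) h (colt j).
have Eh : Em *m hv = 0.
  apply/matrixP => i j; rewrite !mxE -[RHS](hyp (rowu i) (rowuU i)) sumB.
  by apply: eq_bigr => j' _; rewrite !mxE.
have : \adj Em *m (Em *m hv) = 0 by rewrite Eh mulmx0.
rewrite mulmxA mul_adj_mx mul_scalar_mx => /matrixP hz.
move=> t tB; have := hz (enum_rank_in tB t) 0; rewrite !mxE /colt enum_rankK_in //.
by move/eqP; rewrite mulf_eq0 (negbTE detE) /= => /eqP.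
Qed.

Definition fits (n k : nat) (r : seq nat) := ((size r <= k) && all (fun x => x <= n) r)%N.

Definition tup n k (r : seq nat) : k.-tuple 'I_n.+1 :=
  insubd [tuple of nseq k ord0]
    (sort (@ordle n.+1) [seq inord x | x <- r ++ nseq (k - size r) 0%N]).
Arguments tup {n k}.

Lemma tup_val n k r : fits n k r ->
  map val (@tup n k r) = sort leq (r ++ nseq (k - size r) 0%N).
Proof.
move=> /andP[sr ar].
rewrite val_insubd size_sort size_map size_cat size_nseq subnKC // eqxx.
rewrite (map_sort (leT := leq)) //; congr sort.
rewrite -map_comp map_id_in // => x; rewrite mem_cat => /orP[xr|].
  by rewrite /= inordK // ltnS; exact: (allP ar).
by case/nseqP => -> _ /=; rewrite inordK.
Qed.

Lemma tup_in n k r : @tup n k r \in Bcols n k.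
Proof.
rewrite inE /tup val_insubd; case: ifP => _; last first.
  by rewrite /= map_nseq; elim: k => //= -[].
rewrite sorted_map; apply: sort_sorted => x y; exact: leq_total.
Qed.

Lemma esubseq_tup a n k (S : {set 'I_a}) r : fits n k r ->
  esubseq S (map val (@tup n k r)) = esubseq S r.
Proof.
move=> f; rewrite tup_val //.
have pe : perm_eq (sort leq (r ++ nseq (k - size r) 0%N)) (r ++ nseq (k - size r) 0%N)
  by rewrite perm_sort.
rewrite (esubseq_perm _ S _ _ pe).
by rewrite esubseq_cat esubseq_nseq0 mulr1.
Qed.

Lemma geq_trans : transitive geq.
Proof. by move=> x y z h1 h2; exact: leq_trans h2 h1. Qed.
Lemma geq_anti : antisymmetric geq.
Proof. by move=> x y /andP[h1 h2]; apply/eqP; rewrite eqn_leq; apply/andP; split. Qed.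

Lemma tup_inj n k r1 r2 : fits n k r1 -> fits n k r2 ->
  is_partition r1 -> is_partition r2 -> @tup n k r1 = @tup n k r2 -> r1 = r2.
Proof.
move=> f1 f2 /andP[s1 p1] /andP[s2 p2] e0.
have := congr1 (fun t : k.-tuple 'I_n.+1 => map val t) e0.
rewrite /= !tup_val // => e.
have : perm_eq (r1 ++ nseq (k - size r1) 0%N) (r2 ++ nseq (k - size r2) 0%N).
  by rewrite -(perm_sort leq) e perm_sort.
move/(perm_filter (fun x => 0 < x)%N); rewrite !filter_cat.
have z m : [seq x <- nseq m 0%N | (0 < x)%N] = [::] by elim: m.
rewrite !z !cats0 (all_filterP p1) (all_filterP p2) => pe.
exact: (sorted_eq geq_trans geq_anti).
Qed.

Local Close Scope ring_scope.

Lemma spar_gap (l : seq nat) : sorted (fun x y => y < x) l -> all (fun x => 0 < x) l ->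
  forall i, i < size l -> size l - i <= nth 0 l i.
Proof.
elim: l => //= x l IH hs /andP[x0 al] [|i] /=.
  move=> _; rewrite subn0; case: l IH hs al => //= y l IH /andP[yx hs] al.
  have := IH hs al 0 isT; rewrite subn0 /= => h.
  exact: leq_ltn_trans h yx.
rewrite ltnS subSS => il; apply: IH => //; exact: (path_sorted hs).
Qed.

Lemma lam_shift_size k l : size (lam_shift k l) = k.
Proof. by rewrite /lam_shift size_map size_iota. Qed.

Lemma lam_shift_nth k l i : i < k -> nth 0 (lam_shift k l) i = nth 0 l i - (k - i).
Proof. by move=> ik; rewrite /lam_shift (nth_map 0) ?size_iota // nth_iota. Qed.

Section Spar.
Variables (a k : nat) (l : seq nat) (hl : in_SPar a k l).

Let hs : sorted (fun x y => y < x) l. Proof. by case/andP: hl => /andP[]. Qed.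
Let hsz : size l = k. Proof. by case/andP: hl => /andP[_ /eqP]. Qed.
Let hal : all (fun x => (0 < x) && (x <= a)) l. Proof. by case/andP: hl. Qed.

Lemma spar_gap' i : i < k -> k - i <= nth 0 l i.
Proof.
move=> ik; rewrite -hsz; apply: spar_gap => //; last by rewrite hsz.
by apply/allP => x /(allP hal) /andP[].
Qed.

Lemma spar_dec i : i.+1 < k -> nth 0 l i.+1 < nth 0 l i.
Proof. by move=> ik; move/(sortedP 0): hs; apply; rewrite hsz. Qed.

Lemma spar_le_a i : i < k -> nth 0 l i <= a.
Proof. by move=> ik; have /andP[] := allP hal _ (mem_nth 0 (ltac:(by rewrite hsz) : i < size l)). Qed.

Lemma lam_shift_sorted : sorted geq (lam_shift k l).
Proof.
apply/(sortedP 0) => i; rewrite lam_shift_size => ik.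
rewrite !lam_shift_nth // ?(ltn_trans _ ik) //.
have h1 := @spar_dec i ik; have h2 := @spar_gap' i.+1 ik.
rewrite /geq /=; lia.
Qed.

Lemma lam_shift_le : all (fun x => x <= a - k) (lam_shift k l).
Proof.
apply/(all_nthP 0) => i; rewrite lam_shift_size => ik.
have k0 : 0 < k by exact: leq_ltn_trans ik.
have := @sorted_leq_nth _ _ geq_trans (fun x => leqnn x) 0 _ lam_shift_sorted 0 i.
rewrite !inE lam_shift_size => /(_ k0 ik (leq0n _)).
rewrite /geq /= => h; apply: (leq_trans h); rewrite lam_shift_nth // subn0.
by apply: leq_sub2r; apply: spar_le_a.
Qed.

Lemma lam_strip_part : is_partition (strip0 (lam_shift k l)).
Proof.
rewrite /is_partition /strip0 (sorted_filter geq_trans) ?lam_shift_sorted //=.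
by apply/allP => x; rewrite mem_filter => /andP[].
Qed.

Lemma lam_strip_fits : fits (a - k) k (strip0 (lam_shift k l)).
Proof.
apply/andP; split; first by rewrite /strip0 size_filter (leq_trans (count_size _ _)) ?lam_shift_size.
by apply/allP => x; rewrite mem_filter => /andP[_ /(allP lam_shift_le)].
Qed.

Lemma lam_shift_perm : perm_eq (lam_shift k l)
   (strip0 (lam_shift k l) ++ nseq (k - size (strip0 (lam_shift k l))) 0).
Proof.
set s := lam_shift k l.
rewrite perm_sym; apply: (perm_trans _ (permEl (perm_filterC (fun x => 0 < x) s))).
rewrite perm_cat2l.
have -> : [seq x <- s | predC (fun x => 0 < x) x] = nseq (k - size (strip0 s)) 0.
  have /all_pred1P -> : all (pred1 0) [seq x <- s | predC (fun x => 0 < x) x].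
    by apply/allP => x; rewrite mem_filter /= lt0n negbK => /andP[].
  congr nseq; rewrite /strip0 !size_filter.
  have := count_predC (fun x => 0 < x) s; rewrite lam_shift_size => <-.
  by rewrite addKn.
by [].
Qed.

Lemma lam_nth i : i < k -> nth 0 l i = nth 0 (lam_shift k l) i + (k - i).
Proof. by move=> ik; rewrite lam_shift_nth // subnK // spar_gap'. Qed.

End Spar.

Lemma spar_inj a k l1 l2 : in_SPar a k l1 -> in_SPar a k l2 ->
  strip0 (lam_shift k l1) = strip0 (lam_shift k l2) -> l1 = l2.
Proof.
move=> h1 h2 e.
have es : lam_shift k l1 = lam_shift k l2.
  apply: (sorted_eq geq_trans geq_anti (lam_shift_sorted _ _ _ h1) (lam_shift_sorted _ _ _ h2)).
  by rewrite (permPl (lam_shift_perm k l1)) (permPr (lam_shift_perm k l2)) e.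
have s1 : size l1 = k by case/andP: h1 => /andP[_ /eqP].
have s2 : size l2 = k by case/andP: h2 => /andP[_ /eqP].
apply: (eq_from_nth (x0 := 0)); first by rewrite s1 s2.
by move=> i; rewrite s1 => ik; rewrite (lam_nth _ _ _ h1 _ ik) (lam_nth _ _ _ h2 _ ik) es.
Qed.

Local Open Scope ring_scope.

Local Close Scope ring_scope.

Definition pot (K : nat) (r : seq nat) := \sum_(i < K) sumn (take i r).

Lemma dom_le nu sg : sdominates nu sg ->
  forall i, sumn (take i sg) <= sumn (take i nu).
Proof.
case/andP => /andP[_ /eqP es] /forallP h i.
case: (leqP i (size nu + size sg)) => hi.
  exact: (h (Ordinal (hi : i < (size nu + size sg).+1))).
rewrite !take_oversize ?es //; lia.
Qed.

Lemma pos_sum0 (s : seq nat) : all (fun x => 0 < x) s -> sumn s = 0 -> s = [::].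
Proof. by case: s => //= x s /andP[x0 _]; lia. Qed.

Lemma dom_size nu sg : is_partition nu -> sdominates nu sg -> size nu <= size sg.
Proof.
move=> /andP[_ pn] hd; have := dom_le _ _ hd (size sg); rewrite take_size.
case/andP: hd => /andP[_ /eqP es] _.
rewrite -{1}es -{1}(cat_take_drop (size sg) nu) sumn_cat => h.
have : sumn (drop (size sg) nu) = 0 by lia.
move/pos_sum0; rewrite -{1}(cat_take_drop (size sg) nu) all_cat in pn.
case/andP: pn => _ /[swap] /[apply] /(congr1 size); rewrite size_drop /=; lia.
Qed.

Lemma prefix_eq (s1 s2 : seq nat) : all (fun x => 0 < x) s1 -> all (fun x => 0 < x) s2 ->
  (forall i, sumn (take i s1) = sumn (take i s2)) -> s1 = s2.
Proof.
elim: s1 s2 => [|x s1 IH] [|y s2] //=.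
- by move=> _ /andP[y0 _] /(_ 1) /=; lia.
- by move=> /andP[x0 _] _ /(_ 1) /=; lia.
move=> /andP[x0 a1] /andP[y0 a2] h.
have exy : x = y by have := h 1; rewrite /= !take0 /=; lia.
rewrite exy (IH s2) // => i; have := h i.+1; rewrite /= exy; lia.
Qed.

Lemma dom_pot K nu sg : is_partition nu -> all (fun x => 0 < x) sg ->
  size sg < K -> sdominates nu sg -> pot K sg < pot K nu.
Proof.
move=> pn psg sK hd.
have hle := dom_le _ _ hd.
have szn := dom_size _ _ pn hd.
have [i iK lt] : exists2 i, i < K & sumn (take i sg) < sumn (take i nu).
  case: (boolP (has (fun i => sumn (take i sg) < sumn (take i nu)) (iota 0 K))).
    by case/hasP => i; rewrite mem_iota add0n => iK lt; exists i.
  move/hasPn => hn.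
  case/andP: hd => /andP[/eqP ne /eqP es] _; exfalso; apply: ne.
  apply: prefix_eq => //; first by case/andP: pn.
  move=> i; case: (ltnP i K) => iK.
    apply/eqP; rewrite eqn_leq hle andbT leqNgt.
    by apply: hn; rewrite mem_iota add0n.
  by rewrite !take_oversize ?es //; lia.
rewrite /pot (bigD1 (Ordinal iK)) //= [X in _ < X](bigD1 (Ordinal iK)) //=.
rewrite -addSn leq_add // leq_sum // => j _; exact: hle.
Qed.

Local Open Scope ring_scope.

Lemma msym_esubseq a (s : 'S_a) (A : {set 'I_a}) r :
  msym s (esubseq A r) = esubseq (s @: A) r.
Proof. by rewrite /esubseq rmorph_prod /=; apply: eq_bigr => x _; rewrite msym_esub. Qed.

Lemma card_tail a k : (k <= a)%N -> #|tailvars a k| = (a - k)%N.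
Proof.
move=> hka.
have e : ~: tailvars a k = [set widen_ord hka i | i in 'I_k].
  apply/setP => i; rewrite !inE -ltnNge; apply/idP/imsetP => [ik|[j _ ->]].
    by exists (Ordinal ik) => //; apply: val_inj.
  by rewrite /= ltn_ord.
by rewrite cardsCs e card_imset ?card_ord //; by move=> x y /(congr1 val) /= /val_inj.
Qed.

Lemma pick_sum a n k (F : k.-tuple 'I_n.+1 -> {mpoly int[a]}) t0 : t0 \in Bcols n k ->
  \sum_(t in Bcols n k) F t * (t0 == t)%:R = F t0.
Proof.
move=> t0B; rewrite (bigD1 t0) //= eqxx mulr1 big1 ?addr0 // => t /andP[_ ne].
by rewrite eq_sym (negbTE ne) mulr0.
Qed.

Lemma core2 a k (hka : (k <= a)%N) (Ls : seq (seq nat)) (f g : seq nat -> {mpoly int[a]})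
  (ns : seq nat -> seq (seq nat)) (d : seq nat -> seq nat -> int) :
  uniq Ls -> all (in_SPar a k) Ls ->
  (forall l, l \in Ls ->
     all (fun nu => is_partition nu && sdominates nu (strip0 (lam_shift k l))) (ns l) /\
     g l = esubseq (tailvars a k) (lam_shift k l)
           + \sum_(nu <- ns l) d l nu *: esubseq (tailvars a k) nu) ->
  (forall l (s : 'S_a), msym s (f l) = f l) ->
  \sum_(l <- Ls) g l * f l = 0 -> forall l, l \in Ls -> f l = 0.
Proof.
move=> uL aL hgl fsym hsum.
pose sg l := strip0 (lam_shift k l).
pose Uc (t : k.-tuple 'I_(a-k).+1) l : {mpoly int[a]} :=
   (@tup (a-k) k (sg l) == t)%:R +
   \sum_(nu <- ns l) ((fits (a-k) k nu && (@tup (a-k) k nu == t))%:R * (d l nu)%:MP).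
pose h t := \sum_(l <- Ls) Uc t l * f l.
have relS : forall S : {set 'I_a}, #|S| = (a - k)%N ->
   \sum_(t in Bcols (a-k) k) esubseq S (map val t) * h t =
   \sum_(l <- Ls) (esubseq S (lam_shift k l) +
                   \sum_(nu <- ns l) d l nu *: esubseq S nu) * f l.
  move=> S cS; rewrite /h.
  under eq_bigr do rewrite big_distrr.
  rewrite exchange_big /=.
  rewrite big_seq_cond [RHS]big_seq_cond; apply: eq_bigr => l /andP[lL _].
  have lS : in_SPar a k l by exact: (allP aL).
  under eq_bigr do rewrite mulrA.
  rewrite -big_distrl /=; congr (_ * _).
  rewrite /Uc; under eq_bigr do rewrite mulrDr.
  rewrite big_split /=; congr (_ + _).
    rewrite pick_sum ?tup_in // esubseq_tup ?esubseq_strip0 //.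
    exact: lam_strip_fits.
  under eq_bigr do rewrite big_distrr.
  rewrite exchange_big /=; apply: eq_big_seq => nu nuL.
  have /andP[pnu dnu] := allP (proj1 (hgl l lL)) nu nuL.
  case fnu : (fits (a - k) k nu) => /=.
    under eq_bigr do rewrite mulrA.
    by rewrite -big_distrl /= pick_sum ?tup_in // esubseq_tup // mulrC mul_mpolyC.
  rewrite big1 ?esubseq_big ?scaler0 //; last by move=> t _; rewrite mul0r mulr0.
  rewrite cS; apply: contraFN fnu => alnu; rewrite /fits alnu andbT.
  apply: (leq_trans (dom_size _ _ pnu dnu)).
  by case/andP: (lam_strip_fits _ _ _ lS).
have hz : forall t, t \in Bcols (a - k) k -> h t = 0.
  apply: core_mat => // u uU.
  have [w ew] : exists w : 'S_a, w @: tailvars a k = Sof u.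
    by apply: perm_sets; rewrite card_tail // card_Sof.
  rewrite relS ?card_Sof // -ew.
  transitivity (msym w (\sum_(l <- Ls) g l * f l)); last by rewrite hsum raddf0.
  rewrite raddf_sum /= big_seq_cond [RHS]big_seq_cond.
  apply: eq_bigr => l /andP[lL _].
  rewrite msymM fsym (proj2 (hgl l lL)).
  rewrite msymD msym_esubseq raddf_sum /=; congr ((_ + _) * _).
  by apply: eq_bigr => nu _; rewrite msymZ msym_esubseq.
move=> l1 l1L; apply/eqP/negPn/negP => nz1.
have exP : exists m, has (fun l => (f l != 0) && (pot k.+1 (sg l) == m)) Ls.
  by exists (pot k.+1 (sg l1)); apply/hasP; exists l1; rewrite ?nz1 ?eqxx.
case: (ex_minnP exP) => m /hasP[l0 l0L /andP[nz0 /eqP pm]] minm.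
have l0S : in_SPar a k l0 by exact: (allP aL).
have tupeq : forall nu, is_partition nu -> fits (a - k) k nu ->
    @tup (a-k) k nu = @tup (a-k) k (sg l0) -> nu = sg l0.
  move=> nu pnu fnu e.
  exact: (tup_inj _ _ _ _ fnu (lam_strip_fits _ _ _ l0S) pnu (lam_strip_part _ _ _ l0S) e).
have hzl0 := hz (@tup (a-k) k (sg l0)) (tup_in _ _ _).
rewrite /h (bigD1_seq l0) //= in hzl0.
have U0 : Uc (@tup (a-k) k (sg l0)) l0 = 1.
  rewrite /Uc eqxx big1_seq ?addr0 // => nu /andP[_ nuL].
  have /andP[pnu dnu] := allP (proj1 (hgl l0 l0L)) nu nuL.
  case fnu : (fits (a - k) k nu); last by rewrite /= mul0r.
  case: (@tup (a-k) k nu =P @tup (a-k) k (sg l0)) => [e|]; last by rewrite mul0r.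
  have := tupeq nu pnu fnu e; case/andP: dnu => /andP[/eqP ne _] _ /ne [].
have U1 : \sum_(i <- Ls | i != l0) Uc (@tup (a-k) k (sg l0)) i * f i = 0.
  apply: big1_seq => l /andP[ne lL].
  case: (eqVneq (f l) 0) => [->|nzl]; first by rewrite mulr0.
  have lS : in_SPar a k l by exact: (allP aL).
  have ml : (m <= pot k.+1 (sg l))%N.
    by apply: minm; apply/hasP; exists l; rewrite ?nzl ?eqxx.
  rewrite /Uc big1_seq ?addr0.
    case: (@tup (a-k) k (sg l) =P @tup (a-k) k (sg l0)) => [e|]; last by rewrite mul0r.
    have := tup_inj _ _ _ _ (lam_strip_fits _ _ _ lS) (lam_strip_fits _ _ _ l0S)
      (lam_strip_part _ _ _ lS) (lam_strip_part _ _ _ l0S) e.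
    by move/(spar_inj _ _ _ _ lS l0S) => ell; rewrite ell eqxx in ne.
  move=> nu2 /andP[_ nuL].
  have /andP[pnu dnu] := allP (proj1 (hgl l lL)) nu2 nuL.
  case fnu : (fits (a - k) k nu2); last by rewrite /= mul0r.
  case: (@tup (a-k) k nu2 =P @tup (a-k) k (sg l0)) => [e|]; last by rewrite mul0r.
  have enu := tupeq nu2 pnu fnu e; rewrite enu in dnu.
  have : (pot k.+1 (sg l) < pot k.+1 (sg l0))%N.
    apply: (dom_pot _ _ _ (lam_strip_part _ _ _ l0S) _ _ dnu).
      by case/andP: (lam_strip_part _ _ _ lS).
    by rewrite ltnS; case/andP: (lam_strip_fits _ _ _ lS).
  by rewrite pm ltnNge ml.
by move: hzl0; rewrite U0 U1 mul1r addr0 => /eqP; rewrite (negbTE nz0).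
Qed.

Definition mulm a (mu : seq nat) : 'X_{1..a} := [multinom count_mem i.+1 mu | i < a].

Lemma count_perm (s1 s2 : seq nat) : (forall x, count_mem x s1 = count_mem x s2) -> perm_eq s1 s2.
Proof. by move=> h; apply/allP => x _; rewrite /= h. Qed.

Lemma mulm_inj a mu1 mu2 : in_Par a mu1 -> in_Par a mu2 -> mulm a mu1 = mulm a mu2 -> mu1 = mu2.
Proof.
move=> /andP[/andP[s1 p1] b1] /andP[/andP[s2 p2] b2] e.
apply: (sorted_eq geq_trans geq_anti s1 s2); apply: count_perm => x.
have z y (s : seq nat) : all (fun x => x != y) s -> count_mem y s = 0%N.
  by move=> h; apply/eqP; rewrite -leqn0 leqNgt -has_count; apply/hasPn => w /(allP h) /= /negbTE ->.
case: x => [|x].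
  rewrite !z //; [apply/allP => w /(allP p2) | apply/allP => w /(allP p1)]; by case: w.
case: (ltnP x a) => xa.
  by have := congr1 (fun m : 'X_{1..a} => m (Ordinal xa)) e; rewrite /mulm !mnmE.
rewrite !z //; [apply/allP => w /(allP b2) | apply/allP => w /(allP b1)]; lia.
Qed.

Lemma esub_all a r : esub (allvars a) r = mesym a int r.
Proof. by rewrite /esub /mesym; apply: eq_bigl => h; rewrite subsetT. Qed.

Lemma prod_count a (F : nat -> {mpoly int[a]}) (mu : seq nat) :
  all (fun x => (0 < x) && (x <= a))%N mu ->
  \prod_(r <- mu) F r = \prod_(i < a) F i.+1 ^+ count_mem i.+1 mu.
Proof.
elim: mu => [|r mu IH] /=.
  by rewrite big_nil big1 // => i _; rewrite expr0.
case/andP => /andP[r0 ra] al; rewrite big_cons IH //.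
under [RHS]eq_bigr do rewrite exprD.
rewrite big_split /=; congr (_ * _).
have ra' : (r.-1 < a)%N by lia.
rewrite (bigD1 (Ordinal ra')) //= prednK // eqxx expr1 big1 ?mulr1 // => i ne.
case: (r =P i.+1) => [e|_]; last by rewrite /nat_of_bool expr0.
by move: ne; rewrite -val_eqE /= e eqxx.
Qed.

Lemma esubseq_mPo a mu : in_Par a mu ->
  'X_[mulm a mu] \mPo [tuple mesym a int i.+1 | i < a] = esubseq (allvars a) mu.
Proof.
move=> /andP[/andP[_ p] b].
rewrite comp_mpolyX /esubseq (prod_count _ (fun r => esub (allvars a) r)); last first.
  by apply/allP => x xm; rewrite (allP p x xm) (allP b x xm).
by apply: eq_bigr => i _; rewrite tnth_mktuple esub_all /mulm mnmE.
Qed.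

Lemma indep_e a (L : seq (seq nat)) (c : seq nat -> int) : uniq L -> all (in_Par a) L ->
  \sum_(mu <- L) c mu *: esubseq (allvars a) mu = 0 -> forall mu, mu \in L -> c mu = 0.
Proof.
move=> uL aL hs mu muL.
pose t : {mpoly int[a]} := \sum_(m <- L) c m *: 'X_[mulm a m].
have t0 : t = 0.
  apply: msym_fundamental_un0; rewrite /t raddf_sum /= -[RHS]hs.
  rewrite big_seq_cond [RHS]big_seq_cond; apply: eq_bigr => m /andP[mL _].
  by rewrite comp_mpolyZ esubseq_mPo // (allP aL).
have := congr1 (mcoeff (mulm a mu)) t0; rewrite mcoeff0 /t raddf_sum /=.
rewrite (bigD1_seq mu) //= big1_seq.
  by rewrite mcoeffZ mcoeffX eqxx mulr1 addr0.
move=> m /andP[ne mL]; rewrite mcoeffZ mcoeffX; case: eqP => [e|]; last by rewrite mulr0.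
by move: ne; rewrite (mulm_inj _ _ _ (allP aL m mL) (allP aL mu muL) e) eqxx.
Qed.

Lemma fin_choice (X : Type) (x0 : X) (P : seq nat -> X -> Prop) (L : seq (seq nat)) :
  (forall l, l \in L -> exists x, P l x) ->
  exists F : seq nat -> X, forall l, l \in L -> P l (F l).
Proof.
elim: L => [|l L IH] h; first by exists (fun _ => x0).
have [x hx] := h l (mem_head _ _).
have [F hF] : exists F : seq nat -> X, forall l, l \in L -> P l (F l).
  by apply: IH => l' l'L; apply: h; rewrite in_cons l'L orbT.
exists (fun l' => if l' == l then x else F l') => l'; rewrite in_cons.
by case: eqP => [->|_] //= /hF.
Qed.

Theorem mainTheorem13 (a k : nat) (hk1 : (1 <= k)%N) (hka : (k <= a)%N)
  (g : seq nat -> {mpoly int[a]})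
  (hg : forall lam, in_SPar a k lam ->
     exists (ns : seq (seq nat)) (d : seq nat -> int),
       [/\ uniq ns,
           all (fun nu => is_partition nu &&
                  sdominates nu (strip0 (lam_shift k lam))) ns &
           g lam = esubseq (tailvars a k) (lam_shift k lam)
                   + \sum_(nu <- ns) d nu *: esubseq (tailvars a k) nu]) :
  forall (s : seq (seq nat * seq nat)) (c : seq nat * seq nat -> int),
    uniq s ->
    all (fun p => in_SPar a k p.1 && in_Par a p.2) s ->
    \sum_(p <- s) c p *: (g p.1 * esubseq (allvars a) p.2) = 0 ->
    forall p, p \in s -> c p = 0.
Proof.
move=> s c us hs hsum.
pose Ls := undup [seq p.1 | p <- s].
have aLs : all (in_SPar a k) Ls.
  apply/allP => l; rewrite mem_undup => /mapP[p ps ->].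
  by case/andP: (allP hs p ps).
have [F hF] := @fin_choice (seq (seq nat) * (seq nat -> seq nat -> int)%type) ([::], fun _ _ => 0)
  (fun l x => all (fun nu => is_partition nu &&
                  sdominates nu (strip0 (lam_shift k l))) x.1 /\
           g l = esubseq (tailvars a k) (lam_shift k l)
                   + \sum_(nu <- x.1) x.2 l nu *: esubseq (tailvars a k) nu) Ls
  (fun l lL => match hg l (allP aLs l lL) with
     ex_intro ns (ex_intro d (And3 _ h1 h2)) => ex_intro _ (ns, fun _ => d) (conj h1 h2) end).
pose f l := \sum_(p <- s | p.1 == l) c p *: esubseq (allvars a) p.2.
have fsym : forall l (w : 'S_a), msym w (f l) = f l.
  move=> l w; rewrite /f raddf_sum /=; apply: eq_bigr => p _.
  rewrite msymZ msym_esubseq; congr (_ *: esubseq _ _).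
  by apply/eqP; rewrite eqEcard subsetT card_imset ?leqnn //; exact: perm_inj.
have hsum' : \sum_(l <- Ls) g l * f l = 0.
  rewrite -[RHS]hsum.
  transitivity (\sum_(l <- Ls) \sum_(p <- s)
      (if p.1 == l then c p *: (g p.1 * esubseq (allvars a) p.2) else 0)).
    apply: eq_bigr => l _; rewrite /f big_distrr /= big_mkcond /=.
    apply: eq_bigr => p _; case: eqP => [->|_] //=.
    by rewrite scalerAr.
  rewrite exchange_big /= big_seq_cond [RHS]big_seq_cond; apply: eq_bigr => p /andP[ps _].
  have pL : p.1 \in Ls by rewrite mem_undup; apply: map_f.
  rewrite (bigD1_seq p.1) ?undup_uniq //= eqxx big1 ?addr0 // => l ne.
  by rewrite eq_sym (negbTE ne).
have fz := core2 _ _ hka _ f g (fun l => (F l).1) (fun l => (F l).2 l) (undup_uniq _) aLs (fun l lL => hF l lL) fsym hsum'.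
move=> p ps.
have pL : p.1 \in Ls by rewrite mem_undup; apply: map_f.
have := fz p.1 pL; rewrite /f.
pose L := [seq q.2 | q <- s & q.1 == p.1].
have -> : \sum_(q <- s | q.1 == p.1) c q *: esubseq (allvars a) q.2 =
          \sum_(mu <- L) c (p.1, mu) *: esubseq (allvars a) mu.
  rewrite big_map big_filter; apply: eq_bigr => -[x y] /= /eqP -> //.
move/(indep_e a L (fun mu => c (p.1, mu))).
have uL : uniq L.
  rewrite map_inj_in_uniq ?filter_uniq // => -[x1 y1] [x2 y2].
  by rewrite !mem_filter /= => /andP[/eqP -> _] /andP[/eqP -> _] ->.
have aL : all (in_Par a) L.
  by apply/allP => mu /mapP[q]; rewrite mem_filter => /andP[_ qs] ->; case/andP: (allP hs q qs).
move/(_ uL aL p.2) => H.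
have : c (p.1, p.2) = 0 by apply: H; apply/mapP; exists p; rewrite // mem_filter eqxx ps.
by rewrite -surjective_pairing.
Qed.
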